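(* Let $F$ and $G$ be BISO channels with output alphabet $\{-1,0,1\}$ (i.e. $l=1$) such that $\eta_{KL}(F)=\eta_{KL}(G)$. Then $F\succeq_{\mathrm{l.n.}}G$ or $G\succeq_{\mathrm{l.n.}}F$.
   Context: A binary-input symmetric-output (BISO) channel is a channel $P_{Y|X}$ with input alphabet $\{0,1\}$ and finite output alphabet $\mathcal Y=\{0,\pm1,\dots,\pm l\}$ for some integer $l\ge 1$ (some transition probabilities may be zero), such that $P_{Y|X}(y|0)=P_{Y|X}(-y|1)=:p_y$ for all $y\in\mathcal Y$. The KL contraction coefficient is $\eta_{KL}(P)=\sup_{P_X,Q_X}\frac{D(P\circ P_X\|P\circ Q_X)}{D(P_X\|Q_X)}$ (supremum over input distributions with $0<D(P_X\|Q_X)<\infty$, $P\circ P_X$ the output distribution). For channels $P_{Y|X},Q_{Y'|X}$ with the same input alphabet, $P\succeq_{\mathrm{l.n.}}Q$ (less noisy) means: for every finite-alphabet random variable $U$ and every joint distribution $P_{UX}$, with $U-X-Y$ and $U-X-Y'$ Markov chains, $I(U:Y)\ge I(U:Y')$. *)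

(* Defs.v *)
From HB Require Import structures.
From mathcomp Require Import all_boot all_order all_algebra.
From mathcomp Require Import all_classical all_reals exp.
Set Implicit Arguments. Unset Strict Implicit. Unset Printing Implicit Defensive.
Import Order.TTheory GRing.Theory Num.Theory.
Local Open Scope ring_scope.
Local Open Scope classical_set_scope.

Section Info.
Variable R : realType.

Definition is_dist (T : finType) (p : T -> R) : Prop :=
  (forall t, 0 <= p t) /\ \sum_(t : T) p t = 1.

Definition is_channel (X Y : finType) (W : X -> Y -> R) : Prop :=
  forall x, is_dist (W x).

Definition out_dist (X Y : finType) (W : X -> Y -> R) (p : X -> R) : Y -> R :=
  fun y => \sum_(x : X) p x * W x y.

(* KL divergence (natural log), convention 0 ln(0/q) = 0; only used when
   the support of p is contained in the support of q (finite case). *)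
Definition KL (T : finType) (p q : T -> R) : R :=
  \sum_(t : T) (if p t == 0 then 0 else p t * ln (p t / q t)).

(* D(p||q) < oo  iff  supp p is contained in supp q *)
Definition abs_cont (T : finType) (p q : T -> R) : Prop :=
  forall t, q t = 0 -> p t = 0.

Definition eta_KL (X Y : finType) (W : X -> Y -> R) : R :=
  sup [set r | exists (p q : X -> R), [/\ is_dist p, is_dist q, abs_cont p q,
          0 < KL p q & r = KL (out_dist W p) (out_dist W q) / KL p q]].

Definition mutual_info (U Y : finType) (pUY : U -> Y -> R) : R :=
  KL (fun uy : U * Y => pUY uy.1 uy.2)
     (fun uy : U * Y => (\sum_(y : Y) pUY uy.1 y) * (\sum_(u : U) pUY u uy.2)).

(* joint distribution of (U, Y) when U - X - Y, Y obtained from X through W *)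
Definition joint_out (U X Y : finType) (pUX : U -> X -> R) (W : X -> Y -> R)
  : U -> Y -> R := fun u y => \sum_(x : X) pUX u x * W x y.

Definition less_noisy (X Y Y' : finType) (W : X -> Y -> R) (V : X -> Y' -> R)
  : Prop :=
  forall (U : finType) (pUX : U -> X -> R),
    is_dist (fun ux : U * X => pUX ux.1 ux.2) ->
    mutual_info (joint_out pUX V) <= mutual_info (joint_out pUX W).

(* BISO channel with output alphabet {-1,0,1}, encoded as 'I_3 with
   index k standing for k - 1, so that y |-> -y is rev_ord;
   input alphabet {0,1} encoded as bool (false = 0, true = 1). *)
Definition BISO3 (W : bool -> 'I_3 -> R) : Prop :=
  is_channel W /\ forall y : 'I_3, W false y = W true (rev_ord y).

End Info.

(* Main.v *)
Require Import Defs.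
From HB Require Import structures.
From mathcomp Require Import all_boot all_order all_algebra.
From mathcomp Require Import all_classical all_reals exp.
From mathcomp Require Import all_analysis.
From mathcomp Require Import ring lra.
Set Implicit Arguments. Unset Strict Implicit. Unset Printing Implicit Defensive.
Import Order.TTheory GRing.Theory Num.Theory.
Import numFieldNormedType.Exports.
Local Open Scope ring_scope.
Local Open Scope classical_set_scope.
Section Ana.
Variable R : realType.
Definition H (x : R) := x * ln x.

Lemma is_derive_H (y : R) : 0 < y -> is_derive y 1 H (ln y + 1).
Proof.
move=> y0.
have h := @is_deriveM R R id (@ln R) y 1 1 y^-1 (is_derive_id _ _) (is_derive1_ln y0).
apply: is_derive_eq h _.
rewrite /= /GRing.scale /= mulr1 mulfV ?gt_eqF // addrC //.
Qed.

Lemma is_derive_aff (b g y : R) : is_derive y 1 (fun x : R => b + g * x) g.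
Proof.
have h := is_deriveD (is_derive_cst b y 1) (is_deriveZ g (is_derive_id y (1:R))).
apply: is_derive_eq h _.
by rewrite /GRing.scale /= add0r mulr1.
Qed.

Lemma is_derive_term (a b g y : R) : 0 < b + g * y ->
  is_derive y 1 (fun x => a * H (b + g * x)) (a * (g * (ln (b + g * y) + 1))).
Proof.
move=> hy.
have h1 := @is_derive1_comp R H (fun x => b + g * x) y _ _ (is_derive_H hy) (is_derive_aff b g y).
have h2 := is_deriveZ a h1.
have -> : (fun x => a * H (b + g * x)) = a \*: (H \o (fun x => b + g * x)).
  by apply/funext => x.
apply: is_derive_eq h2 _.
rewrite /GRing.scale /=; ring.
Qed.

Lemma is_derive_lnterm (a b g y : R) : 0 < b + g * y ->
  is_derive y 1 (fun x => a * (g * (ln (b + g * x) + 1))) (a * g ^+ 2 / (b + g * y)).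
Proof.
move=> hy.
have h1 := @is_derive1_comp R (@ln R) (fun x => b + g * x) y _ _ (is_derive1_ln hy) (is_derive_aff b g y).
have h3 := is_deriveD h1 (@is_derive_cst R R R^o (1:R) y 1).
have h2 := is_deriveZ (a * g) h3.
have -> : (fun x => a * (g * (ln (b + g * x) + 1))) =
   (a * g) \*: ((@ln R \o (fun x => b + g * x)) + cst 1).
  by apply/funext => x /=; rewrite /GRing.scale /= mulrA.
apply: is_derive_eq h2 _.
rewrite /GRing.scale /= addr0; field.
by rewrite gt_eqF.
Qed.
Lemma H_le_sqrt (y : R) : 0 < y -> - H y <= 2 * Num.sqrt y.
Proof.
move=> y0; set s := Num.sqrt y.
have s0 : 0 < s by rewrite sqrtr_gt0.
have ys : y = s * s by rewrite -expr2 sqr_sqrtr // ltW.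
have lns : ln y = ln s + ln s by rewrite ys lnM ?posrE.
have h1 : - ln s = ln s^-1 by rewrite lnV ?posrE.
have h2 : ln s^-1 < s^-1 by apply: ln_sublinear; rewrite invr_gt0.
rewrite /H lns ys.
have : - ln s <= s^-1 by rewrite h1 ltW.
move=> h3.
have -> : - (s * s * (ln s + ln s)) = 2 * (s * s) * (- ln s) by ring.
have -> : 2 * s = 2 * (s * s) * s^-1 by field; rewrite gt_eqF.
by rewrite ler_wpM2l // mulr_ge0 // mulr_ge0 // ltW.
Qed.

Lemma H_cont : continuous H.
Proof.
move=> x; case: (ltgtP x 0) => [xlt0|xgt0|->].
- apply/cvgrPdist_lt => e e0.
  near=> y.
  have y0 : y < 0 by near: y; exact: lt_nbhsl.
  by rewrite /H !ln0 ?ltW // !mulr0 subrr normr0.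
- apply: continuousM; first exact: cvg_id.
  exact: continuous_ln.
- apply/cvgrPdist_lt => e e0.
  have e20 : 0 < e / 2 by rewrite divr_gt0.
  near=> y.
  have yb : `|y| < Num.min 1 ((e/2)^+2).
    near: y. apply: (@nbhs0_lt _ R^o). rewrite lt_min ltr01 exprn_gt0 //.
  rewrite /H mul0r sub0r normrN.
  case: (lerP y 0) => [yle0|ygt0]; first by rewrite ln0 // mulr0 normr0.
  move: yb; rewrite lt_min => /andP[y1 ye].
  rewrite gtr0_norm // in y1 ye.
  have lny : ln y < 0 by rewrite ln_lt0 // ygt0 y1.
  rewrite ltr0_norm; last by rewrite pmulr_rlt0.
  apply: (le_lt_trans (H_le_sqrt ygt0)).
  have : Num.sqrt y < e / 2.
    rewrite -(@ltr_pXn2r _ 2) ?nnegrE ?sqrtr_ge0 ?ltW //.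
    by rewrite sqr_sqrtr // ltW.
  move=> hs; rewrite -ltr_pdivlMl //.
  by rewrite mulrC.
Unshelve. all: by end_near.
Qed.

Definition Phi (L : seq (R * R * R)) (x : R) :=
  \sum_(t <- L) t.1.1 * H (t.1.2 + t.2 * x).
Definition dPhi (L : seq (R * R * R)) (x : R) :=
  \sum_(t <- L) t.1.1 * (t.2 * (ln (t.1.2 + t.2 * x) + 1)).
Definition d2Phi (L : seq (R * R * R)) (x : R) :=
  \sum_(t <- L) t.1.1 * t.2 ^+ 2 / (t.1.2 + t.2 * x).
Definition okt (t : R * R * R) :=
  (0 <= t.1.2) && (0 <= t.1.2 + t.2) && (0 < t.1.2 + (t.1.2 + t.2)).
Definition okL (L : seq (R * R * R)) := all okt L.

Lemma okt_pos (t : R*R*R) (x : R) : okt t -> 0 < x < 1 -> 0 < t.1.2 + t.2 * x.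
Proof.
case: t => [[a b] g] /= /andP[/andP[h1 h2] h3] /andP[x0 x1].
have -> : b + g * x = (1 - x) * b + x * (b + g) by ring.
case: (ltrP 0 b) => hb.
  have h4 : 0 < (1 - x) * b by rewrite mulr_gt0 // subr_gt0.
  have h5 : 0 <= x * (b + g) by rewrite mulr_ge0 // ltW.
  lra.
have b0 : b = 0 by apply/eqP; rewrite eq_le hb h1.
rewrite b0 mulr0 add0r mulr_gt0 //.
by move: h3; rewrite b0 !add0r.
Qed.

Lemma is_derive_Phi (L : seq (R*R*R)) (x : R) : okL L -> 0 < x < 1 -> is_derive x 1 (Phi L) (dPhi L x).
Proof.
move=> hL hx; elim: L hL => [|t L IH] /=.
  move=> _.
  have -> : Phi [::] = cst 0 by apply/funext => y; rewrite /Phi big_nil.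
  by rewrite /dPhi big_nil; exact: is_derive_cst.
move=> /andP[ht hL].
have -> : Phi (t :: L) = (fun y => t.1.1 * H (t.1.2 + t.2 * y)) + Phi L.
  by apply/funext => y; rewrite /Phi big_cons.
rewrite /dPhi big_cons.
apply: is_deriveD; last exact: IH.
exact: is_derive_term (okt_pos ht hx).
Qed.

Lemma is_derive_dPhi (L : seq (R*R*R)) (x : R) : okL L -> 0 < x < 1 -> is_derive x 1 (dPhi L) (d2Phi L x).
Proof.
move=> hL hx; elim: L hL => [|t L IH] /=.
  move=> _.
  have -> : dPhi [::] = cst 0 by apply/funext => y; rewrite /dPhi big_nil.
  by rewrite /d2Phi big_nil; exact: is_derive_cst.
move=> /andP[ht hL].
have -> : dPhi (t :: L) = (fun y => t.1.1 * (t.2 * (ln (t.1.2 + t.2 * y) + 1))) + dPhi L.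
  by apply/funext => y; rewrite /dPhi big_cons.
rewrite /d2Phi big_cons.
apply: is_deriveD; last exact: IH.
exact: is_derive_lnterm (okt_pos ht hx).
Qed.

Lemma Phi_cont (L : seq (R*R*R)) : continuous (Phi L).
Proof.
elim: L => [|t L IH].
  have -> : Phi [::] = cst 0 by apply/funext => y; rewrite /Phi big_nil.
  exact: cst_continuous.
have -> : Phi (t :: L) = (fun y => t.1.1 * H (t.1.2 + t.2 * y)) + Phi L.
  by apply/funext => y; rewrite /Phi big_cons.
move=> x; apply: continuousD; last exact: IH.
apply: continuousM; first exact: cst_continuous.
apply: (@continuous_comp _ _ _ (fun y => t.1.2 + t.2 * y) H).
  apply/differentiable_continuous/derivable1_diffP.
  by have [] := is_derive_aff t.1.2 t.2 x.
exact: H_cont.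
Qed.

Lemma tangent (L : seq (R*R*R)) (q p : R) : okL L ->
  (forall x, 0 < x < 1 -> 0 <= d2Phi L x) -> 0 < q < 1 -> 0 <= p <= 1 ->
  Phi L q + dPhi L q * (p - q) <= Phi L p.
Proof.
move=> hL h2 /andP[q0 q1] /andP[p0 p1].
have inI (x : R) : x \in `]0, 1[%R -> 0 < x < 1 by rewrite in_itv.
have dmono : {in `]0, 1[%R &, {homo dPhi L : x y / x <= y}}.
  apply: ger0_derive1_le_oo.
  - by move=> x /inI hx; have [] := is_derive_dPhi hL hx.
  - move=> x /inI hx; rewrite derive1E.
    by rewrite (@derive_val _ _ _ _ _ _ _ (is_derive_dPhi hL hx)); exact: h2.
  - move=> x hx0; have hx : 0 < x < 1 by move: hx0; rewrite ?inE /= ?in_itv.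
    apply/differentiable_continuous/derivable1_diffP.
    by have [] := is_derive_dPhi hL hx.
pose g := Phi L - (fun y : R => dPhi L q * y).
have gd (x : R) : 0 < x < 1 -> is_derive x 1 g (dPhi L x - dPhi L q).
  move=> hx; apply: is_deriveB; first exact: is_derive_Phi.
  have h := is_deriveZ (dPhi L q) (is_derive_id x (1:R)).
  apply: is_derive_eq h _; by rewrite /GRing.scale /= mulr1.
have gc : continuous g.
  move=> x; apply: continuousB; first exact: Phi_cont.
  apply: continuousM; [exact: cst_continuous | exact: cvg_id].
suff : g q <= g p.
  rewrite /g !fctE /= => h; rewrite mulrBr; lra.
case: (lerP q p) => hqp.
- apply: (@ger0_derive1_le_cc _ g q p) => //.
  + move=> x; rewrite in_itv /= => /andP[x0 x1].
    have hx : 0 < x < 1 by rewrite (lt_trans q0 x0) (lt_le_trans x1 p1).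
    by have [] := gd x hx.
  + move=> x; rewrite in_itv /= => /andP[x0 x1].
    have hx : 0 < x < 1 by rewrite (lt_trans q0 x0) (lt_le_trans x1 p1).
    rewrite derive1E (@derive_val _ _ _ _ _ _ _ (gd x hx)) subr_ge0.
    by apply: dmono; [rewrite in_itv /= q0 q1 | rewrite in_itv | exact: ltW].
  + exact: continuous_subspaceT.
  + by rewrite in_itv /= lexx hqp.
  + by rewrite in_itv /= lexx hqp.
- apply: (@ler0_derive1_le_cc _ g p q) => //.
  + move=> x; rewrite in_itv /= => /andP[x0 x1].
    have hx : 0 < x < 1 by rewrite (le_lt_trans p0 x0) (lt_trans x1 q1).
    by have [] := gd x hx.
  + move=> x; rewrite in_itv /= => /andP[x0 x1].
    have hx : 0 < x < 1 by rewrite (le_lt_trans p0 x0) (lt_trans x1 q1).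
    rewrite derive1E (@derive_val _ _ _ _ _ _ _ (gd x hx)) subr_le0.
    by apply: dmono; [rewrite in_itv | rewrite in_itv /= q0 q1 | exact: ltW].
  + exact: continuous_subspaceT.
  + by rewrite in_itv /= lexx ltW.
  + by rewrite in_itv /= lexx ltW.
  + exact: ltW.
Qed.

Lemma tangent0 (L : seq (R*R*R)) (q p u v : R) : okL L ->
  (forall x, 0 < x < 1 -> 0 <= d2Phi L x) -> 0 < q < 1 -> 0 <= p <= 1 ->
  Phi L q + u + v * q = 0 -> dPhi L q + v = 0 ->
  0 <= Phi L p + u + v * p.
Proof.
move=> hL h2 hq hp e1 e2.
have := tangent hL h2 hq hp.
have -> : dPhi L q = - v by lra.
have -> : Phi L q = - u - v * q by lra.
move=> h; rewrite mulNr mulrBr in h; lra.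
Qed.
End Ana.

Section B.
Variable R : realType.
Definition i0 : 'I_3 := @Ordinal 3 0 isT.
Definition i1 : 'I_3 := @Ordinal 3 1 isT.
Definition i2 : 'I_3 := @Ordinal 3 2 isT.

Lemma sum3 (f : 'I_3 -> R) : \sum_i f i = f i0 + f i1 + f i2.
Proof.
rewrite !big_ord_recl big_ord0 addr0 addrA.
by congr (_ + _ + _); apply: congr1; apply: val_inj.
Qed.

Lemma sumb (f : bool -> R) : \sum_i f i = f true + f false.
Proof. by rewrite big_bool. Qed.

Section Chan.
Variable W : bool -> 'I_3 -> R.
Hypothesis hW : BISO3 W.
Let a := W false i2.
Let b := W false i0.
Let e := W false i1.

Lemma Wt0 : W true i0 = a.
Proof. by case: hW => _ h; rewrite /a /b /e h; congr W; apply: val_inj. Qed.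
Lemma Wt1 : W true i1 = e.
Proof. by case: hW => _ h; rewrite /a /b /e h; congr W; apply: val_inj. Qed.
Lemma Wt2 : W true i2 = b.
Proof. by case: hW => _ h; rewrite /a /b /e h; congr W; apply: val_inj. Qed.
Lemma Wsum : b + e + a = 1.
Proof. by case: hW => [/(_ false) [_ <-] _]; rewrite sum3. Qed.
Lemma Wge0 y x : 0 <= W x y.
Proof. by case: hW => [/(_ x) [h _] _]. Qed.
End Chan.

Definition T (x y : R) := if x == 0 then 0 else x * ln (x / y).

Lemma T_H x y : 0 <= x -> 0 < y -> T x y = H x - x * ln y.
Proof.
move=> x0 y0; rewrite /T /H; case: eqP => [->|/eqP xn0]; first by rewrite !mul0r subr0.
have xp : 0 < x by rewrite lt_def xn0.
by rewrite ln_div ?posrE // mulrBr.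
Qed.

Lemma T_same x : T x x = 0.
Proof.
rewrite /T; case: eqP => // /eqP xn0.
by rewrite divff // ln1 mulr0.
Qed.

Lemma KL3 (p q : 'I_3 -> R) : KL p q = T (p i0) (q i0) + T (p i1) (q i1) + T (p i2) (q i2).
Proof. by rewrite /KL sum3. Qed.
Lemma KLb (p q : bool -> R) : KL p q = T (p true) (q true) + T (p false) (q false).
Proof. by rewrite /KL sumb. Qed.

Lemma dist_b (p : bool -> R) : is_dist p -> p false = 1 - p true /\ 0 <= p true <= 1.
Proof.
case=> h0 h1; rewrite sumb in h1.
have := h0 true; have := h0 false; move=> ? ?.
split; first lra.
apply/andP; split; lra.
Qed.

Lemma lnb (z : R) : 0 <= z < 1 -> z <= - ln (1 - z) /\ - ln (1 - z) <= z / (1 - z).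
Proof.
move=> /andP[z0 z1].
have hz : 0 < 1 - z by lra.
split.
  have := @le_ln1Dx R (- z) (ltac:(lra)).
  rewrite (_ : 1 + - z = 1 - z) //; lra.
have e : - ln (1 - z) = ln (1 + z / (1 - z)).
  rewrite -lnV ?posrE //; congr ln; field; rewrite gt_eqF //.
rewrite e; apply: le_ln1Dx.
have : 0 <= z / (1 - z) by rewrite divr_ge0 // ltW.
lra.
Qed.

Lemma T2 (c m t : R) : 0 < c -> 0 < c / 2 + m * t -> 0 < c / 2 - m * t ->
  T (c / 2) (c / 2 + m * t) + T (c / 2) (c / 2 - m * t) =
  - (c / 2) * ln (1 - 4 * m ^+ 2 * t ^+ 2 / c ^+ 2).
Proof.
move=> c0 h1 h2.
have c2 : 0 < c / 2 by rewrite divr_gt0.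
rewrite !T_H //; try exact: ltW.
have e1 : ln ((c / 2 + m * t) * (c / 2 - m * t)) = ln (c / 2 + m * t) + ln (c / 2 - m * t).
  by rewrite lnM ?posrE.
have e2 : ln (c / 2 * (c / 2)) = ln (c / 2) + ln (c / 2) by rewrite lnM ?posrE.
have e3 : ln ((c / 2 + m * t) * (c / 2 - m * t) / (c / 2 * (c / 2))) =
   ln ((c / 2 + m * t) * (c / 2 - m * t)) - ln (c / 2 * (c / 2)).
  by rewrite ln_div ?posrE // mulr_gt0.
have e4 : (c / 2 + m * t) * (c / 2 - m * t) / (c / 2 * (c / 2)) =
   1 - 4 * m ^+ 2 * t ^+ 2 / c ^+ 2.
  by field; rewrite gt_eqF.
rewrite -e4 e3 e1 e2 /H; lra.
Qed.
Section Eta.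
Variable W : bool -> 'I_3 -> R.
Hypothesis hW : BISO3 W.
Let a := W false i2.
Let b := W false i0.
Let e := W false i1.
Let m := a - b.
Let c := a + b.
Let k := m ^+ 2 / c.

Lemma a0 : 0 <= a. Proof. exact: Wge0. Qed.
Lemma b0 : 0 <= b. Proof. exact: Wge0. Qed.
Lemma e0 : 0 <= e. Proof. exact: Wge0. Qed.

Lemma out_eq (p : bool -> R) y :
  out_dist W p y = p true * W true y + p false * W false y.
Proof. by rewrite /out_dist sumb. Qed.

Lemma out0 p : is_dist p -> out_dist W p i0 = b + m * p true.
Proof.
move=> /dist_b [hf _]; rewrite out_eq hf (Wt0 hW) /m /a /b. ring.
Qed.
Lemma out1 p : is_dist p -> out_dist W p i1 = e.
Proof.
move=> /dist_b [hf _]; rewrite out_eq hf (Wt1 hW) /e. ring.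
Qed.
Lemma out2 p : is_dist p -> out_dist W p i2 = a - m * p true.
Proof.
move=> /dist_b [hf _]; rewrite out_eq hf (Wt2 hW) /m /a /b. ring.
Qed.

Lemma m0_KL p q : m = 0 -> is_dist p -> is_dist q ->
  KL (out_dist W p) (out_dist W q) = 0.
Proof.
move=> hm hp hq; rewrite KL3 (out0 hp) (out0 hq) (out1 hp) (out1 hq)
  (out2 hp) (out2 hq) hm !mul0r !T_same; by rewrite !addr0.
Qed.

Lemma c_pos : m != 0 -> 0 < c.
Proof.
move=> hm; have := a0; have := b0; rewrite /c lt_def => ha hb.
rewrite addr_ge0 // andbT; apply: contra hm => /eqP h.
have a0' : a = 0 by lra.
have b0' : b = 0 by lra.
by rewrite /m a0' b0' subrr.
Qed.

Lemma okt_b (s : R) : m != 0 -> okt (s, b, m).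
Proof.
move=> hm; have := c_pos hm; have := a0; have := b0.
rewrite /okt /= /c /m => ha hb hc.
apply/andP; split; first (apply/andP; split); lra.
Qed.
Lemma okt_a (s : R) : m != 0 -> okt (s, a, -m).
Proof.
move=> hm; have := c_pos hm; have := a0; have := b0.
rewrite /okt /= /c /m => ha hb hc.
apply/andP; split; first (apply/andP; split); lra.
Qed.
Lemma eta_ub (p q : bool -> R) : is_dist p -> is_dist q -> abs_cont p q ->
  0 < KL p q -> KL (out_dist W p) (out_dist W q) <= k * KL p q.
Proof.
move=> hp hq hac hKL.
have [hm|hm] := eqVneq m 0.
  by rewrite m0_KL // /k hm expr2 !mul0r.
have cp := c_pos hm.
have [pf hpt] := dist_b hp.
have [qf hqt] := dist_b hq.
set pi := p true in pf hpt *.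
set sg := q true in qf hqt *.
have sg0 : 0 < sg.
  rewrite lt_def; case/andP: hqt => -> _; rewrite andbT.
  apply/negP => /eqP h0.
  have hpt0 : pi = 0 by apply: hac.
  move: hKL; rewrite KLb -/pi -/sg pf qf hpt0 h0 !T_same addr0.
  by rewrite ltxx.
have sg1 : sg < 1.
  rewrite lt_def; case/andP: hqt => _ ->; rewrite andbT.
  apply/negP => /eqP h0.
  have hqf : q false = 0 by rewrite qf -h0 subrr.
  have hpf0 : p false = 0 by apply: hac.
  have hpt1 : pi = 1 by move: pf; rewrite hpf0; lra.
  move: hKL; rewrite KLb -/pi -/sg hpf0 hqf hpt1 -h0 !T_same addr0.
  by rewrite ltxx.
have hs : 0 < sg < 1 by rewrite sg0 sg1.
have y0p : 0 < b + m * sg by have := okt_pos (okt_b 0 hm) hs.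
have y2p : 0 < a - m * sg.
  by have := okt_pos (okt_a 0 hm) hs; rewrite /= mulNr.
have [pi0 pi1] : 0 <= pi /\ pi <= 1 by case/andP: hpt.
have x0 : 0 <= b + m * pi.
  have -> : b + m * pi = (1 - pi) * b + pi * a by rewrite /m; ring.
  by rewrite addr_ge0 // mulr_ge0 ?a0 ?b0 // subr_ge0.
have x2 : 0 <= a - m * pi.
  have -> : a - m * pi = (1 - pi) * a + pi * b by rewrite /m; ring.
  by rewrite addr_ge0 // mulr_ge0 ?a0 ?b0 // subr_ge0.
rewrite KL3 (out0 hp) (out0 hq) (out1 hp) (out1 hq) (out2 hp) (out2 hq) T_same.
rewrite -/pi -/sg !T_H //.
rewrite KLb -/pi -/sg pf qf !T_H //; [|lra|lra].
pose L := [:: (k, 0, 1); (k, 1, -1); (-1, b, m); (-1, a, -m)].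
pose u := - k * ln (1 - sg) + b * ln (b + m * sg) + a * ln (a - m * sg).
pose v := k * ln (1 - sg) - k * ln sg + m * ln (b + m * sg) - m * ln (a - m * sg).
have PhiE x : Phi L x = k * H x + k * H (1 - x) - H (b + m * x) - H (a - m * x).
  rewrite /Phi !big_cons big_nil /= add0r mul1r addr0 !mulN1r !mulNr.
  rewrite (_ : 1 + - x = 1 - x) // (_ : a + - (m * x) = a - m * x) //.
  by rewrite !addrA.
have dPhiE x : dPhi L x = k * (ln x + 1) - k * (ln (1 - x) + 1)
    - m * (ln (b + m * x) + 1) + m * (ln (a - m * x) + 1).
  rewrite /dPhi !big_cons big_nil /= add0r mul1r addr0 !mulN1r !mulNr.
  rewrite (_ : 1 + - x = 1 - x) // (_ : a + - (m * x) = a - m * x) //.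
  rewrite mul1r.
  lra.
have hL : okL L.
  rewrite /okL /= okt_b // okt_a // /okt /= !andbT.
  by rewrite !add0r subrr addr0 lexx ler01 ltr01.
have h2 : forall x, 0 < x < 1 -> 0 <= d2Phi L x.
  move=> x /andP[xa xb].
  have hx : 0 < x < 1 by rewrite xa xb.
  have yb : 0 < b + m * x by have := okt_pos (okt_b 0 hm) hx.
  have ya : 0 < a - m * x by have := okt_pos (okt_a 0 hm) hx; rewrite /= mulNr.
  rewrite /d2Phi !big_cons big_nil /= add0r mul1r addr0 !mulN1r !mulNr.
  rewrite (_ : 1 + - x = 1 - x) // (_ : a + - (m * x) = a - m * x) //.
  have -> : k * 1 ^+ 2 / x + (k * (-1) ^+ 2 / (1 - x) +
     (- (m ^+ 2 / (b + m * x)) - (- m) ^+ 2 / (a - m * x))) =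
     m ^+ 2 * (4 * a * b * (x - 1/2) ^+ 2) / ((a + b) * x * (1 - x) * ((b + m * x) * (a - m * x))).
    rewrite /k /c /m. field.
    have x1 : 0 < 1 - x by lra.
    by rewrite -/m -/c (gt_eqF ya) (gt_eqF yb) (gt_eqF x1) (gt_eqF xa) (gt_eqF cp).
  have ha := a0; have hb := b0.
  have x1 : 0 < 1 - x by lra.
  apply: divr_ge0.
    apply: mulr_ge0; first exact: sqr_ge0.
    by apply: mulr_ge0; [rewrite mulr_ge0 // mulr_ge0 | exact: sqr_ge0].
  by rewrite -/c !mulr_ge0 // ltW.
have := tangent0 (u := u) (v := v) hL h2 hs hpt.
rewrite !PhiE dPhiE /u /v => h.
have e1 : k * H sg + k * H (1 - sg) - H (b + m * sg) - H (a - m * sg) +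
  (- k * ln (1 - sg) + b * ln (b + m * sg) + a * ln (a - m * sg)) +
  (k * ln (1 - sg) - k * ln sg + m * ln (b + m * sg) - m * ln (a - m * sg)) * sg = 0.
  rewrite /H; lra.
have e2 : k * (ln sg + 1) - k * (ln (1 - sg) + 1) - m * (ln (b + m * sg) + 1) +
  m * (ln (a - m * sg) + 1) + (k * ln (1 - sg) - k * ln sg + m * ln (b + m * sg) -
  m * ln (a - m * sg)) = 0 by lra.
have := h e1 e2.
lra.
Qed.
Definition pf : bool -> R := fun _ => 1 / 2.
Definition qf (t : R) : bool -> R := fun x => if x then 1 / 2 + t else 1 / 2 - t.

Lemma pf_dist : is_dist pf.
Proof. split => [x|]; first by rewrite /pf; lra. by rewrite sumb /pf; field. Qed.

Lemma qf_dist t : 0 < t < 1 / 2 -> is_dist (qf t).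
Proof.
move=> /andP[t0 t1]; split => [x|]; last by rewrite sumb /qf; field.
by case: x; rewrite /qf; lra.
Qed.

Lemma qf_ac t : 0 < t < 1 / 2 -> abs_cont pf (qf t).
Proof.
move=> /andP[t0 t1] x; case: x; rewrite /qf => h; exfalso; lra.
Qed.

Lemma KL_fam t : 0 < t < 1 / 2 ->
  0 < KL pf (qf t) /\ KL pf (qf t) <= 2 * t ^+ 2 / (1 - 4 * t ^+ 2).
Proof.
move=> /andP[t0 t1].
have eK : KL pf (qf t) = - (1 / 2) * ln (1 - 4 * 1 ^+ 2 * t ^+ 2 / 1 ^+ 2).
  rewrite KLb /pf /qf /=.
  have := @T2 1 1 t ltr01; rewrite !mul1r; apply; lra.
rewrite eK (_ : 4 * 1 ^+ 2 * t ^+ 2 / 1 ^+ 2 = 4 * t ^+ 2); last by field.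
have hz : 0 <= 4 * t ^+ 2 < 1.
  apply/andP; split; first by rewrite mulr_ge0 // sqr_ge0.
  have : t ^+ 2 < (1/2) ^+ 2 by rewrite ltr_pXn2r // ?nnegrE; lra.
  rewrite expr_div_n expr1n; lra.
have [l1 l2] := lnb hz.
have tp : 0 < t ^+ 2 by rewrite exprn_gt0.
split; first lra.
have -> : 2 * t ^+ 2 / (1 - 4 * t ^+ 2) = (1 / 2) * (4 * t ^+ 2 / (1 - 4 * t ^+ 2)).
  by field; case/andP: hz => _ h; rewrite gt_eqF //; lra.
lra.
Qed.

Lemma KLout_fam t : m != 0 -> 0 < t < 1 / 2 ->
  2 * k * t ^+ 2 <= KL (out_dist W pf) (out_dist W (qf t)).
Proof.
move=> hm ht; have cp := c_pos hm.
have hq := qf_dist ht.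
have [t0 t1] : 0 < t /\ t < 1/2 by case/andP: ht.
rewrite KL3 (out0 pf_dist) (out0 hq) (out1 pf_dist) (out1 hq) (out2 pf_dist) (out2 hq).
rewrite T_same addr0 /pf /qf /=.
have ha := a0; have hb := b0.
have e1 : b + m * (1 / 2) = c / 2 by rewrite /c /m; field.
have e2 : b + m * (1 / 2 + t) = c / 2 + m * t by rewrite /c /m; field.
have e3 : a - m * (1 / 2) = c / 2 by rewrite /c /m; field.
have e4 : a - m * (1 / 2 + t) = c / 2 - m * t by rewrite /c /m; field.
rewrite e1 e2 e3 e4.
have h1 : 0 < c / 2 + m * t.
  have -> : c / 2 + m * t = a * (1/2 + t) + b * (1/2 - t) by rewrite /c /m; field.
  have : 0 < (a + b) * (1 / 2 - t) by rewrite mulr_gt0 //; lra.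
  have : 0 <= a * (2 * t) by rewrite mulr_ge0 //; lra.
  lra.
have h2 : 0 < c / 2 - m * t.
  have -> : c / 2 - m * t = b * (1/2 + t) + a * (1/2 - t) by rewrite /c /m; field.
  have : 0 < (a + b) * (1 / 2 - t) by rewrite mulr_gt0 //; lra.
  have : 0 <= b * (2 * t) by rewrite mulr_ge0 //; lra.
  lra.
rewrite T2 //.
set z := 4 * m ^+ 2 * t ^+ 2 / c ^+ 2.
have hz : 0 <= z < 1.
  apply/andP; split.
    rewrite /z; apply: divr_ge0; last exact: sqr_ge0.
    apply: mulr_ge0; last exact: sqr_ge0.
    by apply: mulr_ge0; [lra|exact: sqr_ge0].
  rewrite /z ltr_pdivrMr ?exprn_gt0 // mul1r.
  have : (c / 2 + m * t) * (c / 2 - m * t) > 0 by rewrite mulr_gt0.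
  have -> : (c / 2 + m * t) * (c / 2 - m * t) = (c ^+ 2 - 4 * m ^+ 2 * t ^+ 2) / 4 by field.
  lra.
have [l1 _] := lnb hz.
have -> : 2 * k * t ^+ 2 = c / 2 * z by rewrite /z /k; field; rewrite gt_eqF.
have c2 : 0 <= c / 2 by rewrite divr_ge0 // ltW.
rewrite mulNr -mulrN; exact: ler_wpM2l.
Qed.
Lemma k_pos : m != 0 -> 0 < k.
Proof. by move=> hm; rewrite /k divr_gt0 ?c_pos // exprn_even_gt0. Qed.

Lemma r_fam t : m != 0 -> 0 < t < 1 / 2 ->
  k * (1 - 4 * t ^+ 2) <= KL (out_dist W pf) (out_dist W (qf t)) / KL pf (qf t).
Proof.
move=> hm ht.
have [B0 Bub] := KL_fam ht.
have A := KLout_fam hm ht.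
have kp := k_pos hm.
have [t0 t1] : 0 < t /\ t < 1/2 by case/andP: ht.
have h4 : 0 < 1 - 4 * t ^+ 2.
  have : t ^+ 2 < (1/2) ^+ 2 by rewrite ltr_pXn2r // ?nnegrE; lra.
  rewrite expr_div_n expr1n; lra.
rewrite ler_pdivlMr //.
apply: le_trans A.
have := ler_wpM2l (ltW (mulr_gt0 kp h4)) Bub.
have -> : k * (1 - 4 * t ^+ 2) * (2 * t ^+ 2 / (1 - 4 * t ^+ 2)) = 2 * k * t ^+ 2.
  by field; rewrite gt_eqF.
done.
Qed.

Lemma eta_val : eta_KL W = k.
Proof.
rewrite /eta_KL; set S := (X in sup X).
have ub : ubound S k.
  move=> r [p [q [hp hq hac hKL ->]]].
  by rewrite ler_pdivrMr //; exact: eta_ub.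
have mem t : 0 < t < 1 / 2 ->
    S (KL (out_dist W pf) (out_dist W (qf t)) / KL pf (qf t)).
  move=> ht; exists pf, (qf t); split => //.
  - exact: pf_dist.
  - exact: qf_dist.
  - exact: qf_ac.
  - by have [] := KL_fam ht.
have t14 : 0 < (1 / 4 : R) < 1 / 2 by apply/andP; split; lra.
have ne : S !=set0 by eexists; exact: mem t14.
have hs : has_sup S by split => //; exists k.
apply/eqP; rewrite eq_le; apply/andP; split; first exact: ge_sup.
have [hm|hm] := eqVneq m 0.
  have := sup_upper_bound hs (mem _ t14).
  by rewrite m0_KL //; [rewrite mul0r /k hm expr2 !mul0r | exact: pf_dist | exact: qf_dist].
rewrite leNgt; apply/negP => hlt.
have kp := k_pos hm.
set d := k - sup S.
have d0 : 0 < d by rewrite /d subr_gt0.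
set t := Num.min (1 / 4) (d / (2 * k)).
have tle : t <= 1 / 4 by rewrite /t ge_min lexx.
have tle2 : t <= d / (2 * k) by rewrite /t ge_min lexx orbT.
have t0 : 0 < t by rewrite /t lt_min; apply/andP; split; [lra | rewrite divr_gt0 // mulr_gt0].
have ht : 0 < t < 1 / 2 by apply/andP; split; lra.
have h1 := r_fam hm ht.
have h2 := sup_upper_bound hs (mem _ ht).
have h3 : 4 * t ^+ 2 <= t.
  rewrite expr2; have : t * t <= t * (1 / 4) by rewrite ler_wpM2l // ltW.
  lra.
have h5 : k * t <= d / 2.
  have := ler_wpM2l (ltW kp) tle2.
  have -> : k * (d / (2 * k)) = d / 2 by field; rewrite gt_eqF.
  done.
have h6 : k * (4 * t ^+ 2) <= k * t by rewrite ler_wpM2l // ltW.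
have : k * (1 - 4 * t ^+ 2) <= sup S by apply: le_trans h1 h2.
rewrite /d in h5; rewrite mulrBr mulr1; lra.
Qed.
End Eta.
Lemma H0 : H (0:R) = 0. Proof. by rewrite /H mul0r. Qed.

Lemma H_mul (w z : R) : 0 <= w -> 0 <= z -> H (w * z) = w * H z + z * H w.
Proof.
move=> w0 z0; rewrite /H.
have [->|wn] := eqVneq w 0; first by rewrite !(mulr0, mul0r, addr0, add0r).
have [->|zn] := eqVneq z 0; first by rewrite !(mulr0, mul0r, addr0, add0r).
have wp : 0 < w by rewrite lt_def wn.
have zp : 0 < z by rewrite lt_def zn.
rewrite lnM ?posrE //; ring.
Qed.

Lemma T3 (P w Q : R) : 0 <= P -> 0 <= w -> 0 <= Q -> (0 < P -> 0 < w /\ 0 < Q) ->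
  T P (w * Q) = H P - P * ln w - P * ln Q.
Proof.
move=> P0 w0 Q0 h; rewrite /T /H.
have [->|Pn] := eqVneq P 0; first by rewrite !mul0r !subr0.
have Pp : 0 < P by rewrite lt_def Pn.
have [wp Qp] := h Pp.
rewrite ln_div ?posrE ?mulr_gt0 // lnM ?posrE //; ring.
Qed.

Lemma jensen_Phi (U : finType) (Af Bf : U -> R) (L : seq (R * R * R)) :
  okL L -> (forall x, 0 < x < 1 -> 0 <= d2Phi L x) ->
  (forall u, 0 <= Af u) -> (forall u, 0 <= Bf u) -> \sum_u (Af u + Bf u) = 1 ->
  Phi L (\sum_u Bf u) <= \sum_u (Af u + Bf u) * Phi L (Bf u / (Af u + Bf u)).
Proof.
move=> hL h2 hA hB hs.
set w := fun u => Af u + Bf u.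
set pib := \sum_u Bf u.
have w0 u : 0 <= w u by rewrite /w addr_ge0.
have hsw : \sum_u w u = 1 by exact: hs.
have pi01 u : 0 <= Bf u / w u <= 1.
  rewrite divr_ge0 //=; have [->|wn] := eqVneq (w u) 0; first by rewrite invr0 mulr0 ler01.
  by rewrite ler_pdivrMr ?lt_def ?wn ?w0 // mul1r /w lerDr.
have wpi u : w u * (Bf u / w u) = Bf u.
  have [w00|wn] := eqVneq (w u) 0; last by rewrite mulrC divfK.
  have : Bf u = 0 by move: w00; rewrite /w; have := hA u; have := hB u; lra.
  by move=> ->; rewrite w00 mul0r.
have As : \sum_u Af u = 1 - pib by move: hs; rewrite big_split /= -/pib; lra.
have pib0 : 0 <= pib by rewrite sumr_ge0.
have Asum0 : 0 <= \sum_u Af u by rewrite sumr_ge0.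
have pib1 : pib <= 1 by lra.
have [p0|pn0] := eqVneq pib 0.
  have B0 u : Bf u = 0 by apply: (psumr_eq0P (P := predT) (fun i _ => hB i)).
  rewrite p0.
  under eq_bigr do rewrite B0 mul0r.
  rewrite -mulr_suml (_ : \sum_i (Af i + 0) = 1) ?mul1r //.
  by under eq_bigr do rewrite addr0; rewrite As p0 subr0.
have [p1|pn1] := eqVneq pib 1.
  have A0 u : Af u = 0.
    by apply: (psumr_eq0P (P := predT) (fun i _ => hA i)) => //; rewrite As p1 subrr.
  have e u : w u * Phi L (Bf u / w u) = w u * Phi L 1.
    have [w00|wn] := eqVneq (w u) 0; first by rewrite w00 !mul0r.
    have wB : w u = Bf u by rewrite /w A0 add0r.
    by rewrite -wB divff.
  rewrite p1; under eq_bigr do rewrite e.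
  by rewrite -mulr_suml hsw mul1r.
have hq : 0 < pib < 1 by rewrite !lt_def pn0 pib0 eq_sym pn1 pib1.
have ht u : w u * (Phi L pib + dPhi L pib * (Bf u / w u - pib)) <=
           w u * Phi L (Bf u / w u).
  by rewrite ler_wpM2l //; apply: tangent.
have hsum : \sum_u w u * (Phi L pib + dPhi L pib * (Bf u / w u - pib)) <=
    \sum_u w u * Phi L (Bf u / w u) by apply: ler_sum => u _; exact: ht.
have eq1 : \sum_u w u * (Phi L pib + dPhi L pib * (Bf u / w u - pib)) =
   \sum_u (Phi L pib * w u + dPhi L pib * Bf u - dPhi L pib * pib * w u).
  by apply: eq_bigr => u _; rewrite -[in RHS](wpi u); ring.
rewrite eq1 sumrB big_split /= -!mulr_sumr hsw -/pib in hsum.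
lra.
Qed.
Section MI.
Variable W : bool -> 'I_3 -> R.
Hypothesis hW : BISO3 W.
Let a := W false i2.
Let b := W false i0.
Let e := W false i1.
Let m := a - b.

Definition ent (x : R) := H (b + m * x) + H e + H (a - m * x).

Variable U : finType.
Variable pUX : U -> bool -> R.
Hypothesis hd : is_dist (fun ux : U * bool => pUX ux.1 ux.2).
Let Af u := pUX u false.
Let Bf u := pUX u true.
Let w u := Af u + Bf u.
Let pib := \sum_u Bf u.
Let P := joint_out pUX W.

Lemma pge0 u x : 0 <= pUX u x.
Proof. by case: hd => h _; exact: (h (u, x)). Qed.

Lemma wsum : \sum_u w u = 1.
Proof.
case: hd => _ h; rewrite -(pair_bigA _ (fun u x => pUX u x)) /= in h.
by rewrite -h; apply: eq_bigr => u _; rewrite sumb /w /Af /Bf addrC.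
Qed.

Lemma Asum : \sum_u Af u = 1 - pib.
Proof.
have := wsum; rewrite /w big_split /= -/pib => <-; ring.
Qed.

Lemma Pform u y : P u y = Bf u * W true y + Af u * W false y.
Proof. by rewrite /P /joint_out sumb. Qed.

Lemma Pge0 u y : 0 <= P u y.
Proof.
by rewrite Pform addr_ge0 // mulr_ge0 ?pge0 // (Wge0 hW).
Qed.

Lemma Prow u : \sum_y P u y = w u.
Proof.
rewrite sum3 !Pform (Wt0 hW) (Wt1 hW) (Wt2 hW) -/a -/b -/e.
have := Wsum hW; rewrite -/a -/b -/e /w => hs.
have -> : Bf u * a + Af u * b + (Bf u * e + Af u * e) + (Bf u * b + Af u * a) =
  (Af u + Bf u) * (b + e + a) by ring.
by rewrite hs mulr1.
Qed.

Lemma Pcol0 : \sum_u P u i0 = b + m * pib.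
Proof.
under eq_bigr do rewrite Pform (Wt0 hW) -/a -/b.
rewrite big_split /= -!mulr_suml -/pib Asum /m; ring.
Qed.
Lemma Pcol1 : \sum_u P u i1 = e.
Proof.
under eq_bigr do rewrite Pform (Wt1 hW) -/e.
rewrite big_split /= -!mulr_suml -/pib Asum; ring.
Qed.
Lemma Pcol2 : \sum_u P u i2 = a - m * pib.
Proof.
under eq_bigr do rewrite Pform (Wt2 hW) -/a -/b.
rewrite big_split /= -!mulr_suml -/pib Asum /m; ring.
Qed.
Lemma le_sum1 (I : finType) (F : I -> R) i : (forall j, 0 <= F j) -> F i <= \sum_j F j.
Proof. by move=> h; rewrite (bigD1 i) //= lerDl sumr_ge0. Qed.

Lemma key u : \sum_y H (P u y) = w u * ent (Bf u / w u) + H (w u).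
Proof.
have hA := pge0 u false; have hB := pge0 u true.
rewrite -/(Af u) -/(Bf u) in hA hB.
have [w0|wn] := eqVneq (w u) 0.
  have A0 : Af u = 0 by move: w0; rewrite /w; lra.
  have B0 : Bf u = 0 by move: w0; rewrite /w; lra.
  rewrite w0 mul0r add0r H0 sum3 !Pform A0 B0 !mul0r !addr0 H0; lra.
have wp : 0 < w u by rewrite lt_def wn /w addr_ge0.
set pi := Bf u / w u.
have pi0 : 0 <= pi by rewrite divr_ge0 // ltW.
have pi1 : pi <= 1 by rewrite ler_pdivrMr // mul1r /w lerDr.
have hs := Wsum hW; rewrite -/a -/b -/e in hs.
have ha : 0 <= a := Wge0 hW _ _.
have hb : 0 <= b := Wge0 hW _ _.
have he : 0 <= e := Wge0 hW _ _.
have z0 : 0 <= b + m * pi.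
  have -> : b + m * pi = (1 - pi) * b + pi * a by rewrite /m; ring.
  by rewrite addr_ge0 // mulr_ge0 // subr_ge0.
have z2 : 0 <= a - m * pi.
  have -> : a - m * pi = (1 - pi) * a + pi * b by rewrite /m; ring.
  by rewrite addr_ge0 // mulr_ge0 // subr_ge0.
have p0 : P u i0 = w u * (b + m * pi).
  rewrite Pform (Wt0 hW) -/a -/b /pi /m /w; field; rewrite -/(w u) //.
have p1 : P u i1 = w u * e.
  rewrite Pform (Wt1 hW) -/e /w; ring.
have p2 : P u i2 = w u * (a - m * pi).
  rewrite Pform (Wt2 hW) -/a -/b /pi /m /w; field; rewrite -/(w u) //.
rewrite sum3 p0 p1 p2 !H_mul //; try exact: ltW.
rewrite /ent.
have eq : (b + m * pi) * H (w u) + e * H (w u) + (a - m * pi) * H (w u) = (b + e + a) * H (w u) by ring.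
rewrite hs mul1r in eq.
lra.
Qed.

Lemma MI_form : mutual_info P = \sum_u w u * ent (Bf u / w u) - ent pib.
Proof.
set Q := fun y => \sum_u P u y.
have Q0 y : 0 <= Q y by rewrite /Q sumr_ge0 // => u _; exact: Pge0.
have -> : mutual_info P = \sum_u \sum_y T (P u y) (w u * Q y).
  by rewrite /mutual_info /KL pair_bigA /=; apply: eq_bigr => -[u y] _ /=; rewrite /T Prow.
have hT u y : T (P u y) (w u * Q y) = H (P u y) - P u y * ln (w u) - P u y * ln (Q y).
  apply: T3; first exact: Pge0.
  - by rewrite /w addr_ge0 // pge0.
  - exact: Q0.
  move=> hP; split.
    apply: (lt_le_trans hP); rewrite -Prow; apply: le_sum1 => j; exact: Pge0.
  apply: (lt_le_trans hP); rewrite /Q; exact: (@le_sum1 U (fun v => P v y) u (fun j => Pge0 j y)).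
under eq_bigr do under eq_bigr do rewrite hT.
under eq_bigr do rewrite !sumrB.
rewrite !sumrB.
have e2 : \sum_u \sum_y P u y * ln (w u) = \sum_u H (w u).
  by apply: eq_bigr => u _; rewrite -mulr_suml Prow.
have e3 : \sum_u \sum_y P u y * ln (Q y) = ent pib.
  rewrite exchange_big /=.
  under eq_bigr do rewrite -mulr_suml -/(Q _).
  rewrite sum3 /Q Pcol0 Pcol1 Pcol2 /ent.
  by rewrite /H.
rewrite e2 e3.
under eq_bigr do rewrite key.
rewrite big_split /=; lra.
Qed.
End MI.
Lemma LN_core (F G : bool -> 'I_3 -> R) (L : seq (R * R * R)) (K : R) :
  BISO3 F -> BISO3 G -> okL L -> (forall x, 0 < x < 1 -> 0 <= d2Phi L x) ->
  (forall x, ent F x - ent G x = Phi L x + K) -> less_noisy F G.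
Proof.
move=> hF hG hL h2 hE U pUX hd.
rewrite (MI_form hG hd) (MI_form hF hd).
have hj := jensen_Phi hL h2 (fun u => pge0 hd u false) (fun u => pge0 hd u true) (wsum hd).
have hw := wsum hd.
set w := fun u => pUX u false + pUX u true in hj hw *.
set pib := \sum_u pUX u true in hj *.
have eq : \sum_u w u * ent F (pUX u true / w u) - \sum_u w u * ent G (pUX u true / w u) =
   \sum_u w u * Phi L (pUX u true / w u) + K.
  rewrite -sumrB.
  under eq_bigr do rewrite -mulrBr hE mulrDr.
  by rewrite big_split /= -mulr_suml hw mul1r.
have := hE pib.
lra.
Qed.

Lemma Phi_cat (L1 L2 : seq (R * R * R)) x : Phi (L1 ++ L2) x = Phi L1 x + Phi L2 x.
Proof. by rewrite /Phi big_cat. Qed.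
Lemma d2Phi_cat (L1 L2 : seq (R * R * R)) x : d2Phi (L1 ++ L2) x = d2Phi L1 x + d2Phi L2 x.
Proof. by rewrite /d2Phi big_cat. Qed.
Lemma okL_cat (L1 L2 : seq (R * R * R)) : okL L1 -> okL L2 -> okL (L1 ++ L2).
Proof. by rewrite /okL all_cat => -> ->. Qed.

Section LW.
Variable W : bool -> 'I_3 -> R.
Hypothesis hW : BISO3 W.
Let a := W false i2.
Let b := W false i0.
Let e := W false i1.
Let m := a - b.
Let c := a + b.

Definition LW (s : R) : seq (R * R * R) :=
  if c != 0 then [:: (s, b, m); (s, a, - m)] else [::].

Lemma c0_ab : c = 0 -> a = 0 /\ b = 0.
Proof. have := a0 hW; have := b0 hW; rewrite /c -/a -/b => ha hb hc; split; lra. Qed.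

Lemma Phi_LW s x : Phi (LW s) x = s * (H (b + m * x) + H (a - m * x)).
Proof.
rewrite /LW; case: eqP => [hc|/eqP hc].
  have [ha hb] := c0_ab hc.
  by rewrite /Phi big_nil /m ha hb subrr mul0r addr0 subr0 H0 addr0 mulr0.
by rewrite /= /Phi !big_cons big_nil /= addr0 mulNr; ring.
Qed.

Lemma d2_LW s x : d2Phi (LW s) x = s * (m ^+ 2 / (b + m * x) + m ^+ 2 / (a - m * x)).
Proof.
rewrite /LW; case: eqP => [hc|/eqP hc].
  have [ha hb] := c0_ab hc.
  by rewrite /d2Phi big_nil /m ha hb subrr expr0n /= !mul0r addr0 mulr0.
rewrite /d2Phi !big_cons big_nil /= addr0 mulNr sqrrN.
by rewrite -!mulrA -mulrDr.
Qed.

Lemma ok_LW s : okL (LW s).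
Proof.
rewrite /LW; case: eqP => [//|/eqP hc].
have := a0 hW; have := b0 hW; rewrite -/a -/b => ha hb.
have cp : 0 < c by rewrite lt_def hc /c addr_ge0.
rewrite /okL /= /okt /= andbT.
apply/andP; split; apply/andP; split; try (apply/andP; split); rewrite /m /c in cp *; lra.
Qed.

Lemma ent_LW x : ent W x = Phi (LW 1) x + H e.
Proof. by rewrite Phi_LW /ent mul1r -/a -/b -/e -/m; ring. Qed.
Lemma ent_LWN x : ent W x = - Phi (LW (-1)) x + H e.
Proof. by rewrite Phi_LW /ent -/a -/b -/e -/m; ring. Qed.

Lemma d2W_ge0 x : 0 < x < 1 -> 0 <= m ^+ 2 / (b + m * x) + m ^+ 2 / (a - m * x).
Proof.
move=> hx.
have := a0 hW; have := b0 hW; rewrite -/a -/b => ha hb.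
have [hc|hc] := eqVneq c 0.
  have [ha0 hb0] := c0_ab hc.
  by rewrite /m ha0 hb0 subrr expr0n /= !mul0r addr0.
have cp : 0 < c by rewrite lt_def hc /c addr_ge0.
have yb : 0 < b + m * x.
  apply: (@okt_pos R (1, b, m)) => //; rewrite /okt /= /m /c in cp *.
  apply/andP; split; [apply/andP; split|]; lra.
have ya : 0 < a - m * x.
  have := (@okt_pos R (1, a, - m) x); rewrite /= mulNr; apply => //.
  rewrite /okt /= /m /c in cp *; apply/andP; split; [apply/andP; split|]; lra.
by rewrite addr_ge0 // divr_ge0 ?sqr_ge0 // ltW.
Qed.

Lemma d2W_eq x : 0 < x < 1 -> c != 0 ->
  m ^+ 2 / (b + m * x) + m ^+ 2 / (a - m * x) = m ^+ 2 * c / ((b + m * x) * (a - m * x)).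
Proof.
move=> hx hc.
have := a0 hW; have := b0 hW; rewrite -/a -/b => ha hb.
have cp : 0 < c by rewrite lt_def hc /c addr_ge0.
have yb : 0 < b + m * x.
  apply: (@okt_pos R (1, b, m)) => //; rewrite /okt /= /m /c in cp *.
  apply/andP; split; [apply/andP; split|]; lra.
have ya : 0 < a - m * x.
  have := (@okt_pos R (1, a, - m) x); rewrite /= mulNr; apply => //.
  rewrite /okt /= /m /c in cp *; apply/andP; split; [apply/andP; split|]; lra.
rewrite /c /m; field.
by rewrite -/m (gt_eqF ya) (gt_eqF yb).
Qed.

Lemma D_pos x : 0 < x < 1 -> c != 0 -> 0 < (b + m * x) * (a - m * x).
Proof.
move=> hx hc.
have := a0 hW; have := b0 hW; rewrite -/a -/b => ha hb.
have cp : 0 < c by rewrite lt_def hc /c addr_ge0.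
have yb : 0 < b + m * x.
  apply: (@okt_pos R (1, b, m)) => //; rewrite /okt /= /m /c in cp *.
  apply/andP; split; [apply/andP; split|]; lra.
have ya : 0 < a - m * x.
  have := (@okt_pos R (1, a, - m) x); rewrite /= mulNr; apply => //.
  rewrite /okt /= /m /c in cp *; apply/andP; split; [apply/andP; split|]; lra.
exact: mulr_gt0.
Qed.
End LW.

Lemma LN_gen (F G : bool -> 'I_3 -> R) : BISO3 F -> BISO3 G ->
  (forall x, 0 < x < 1 -> 0 <= d2Phi (LW F 1 ++ LW G (-1)) x) -> less_noisy F G.
Proof.
move=> hF hG h2.
apply: (@LN_core F G (LW F 1 ++ LW G (-1)) (H (F false i1) - H (G false i1))) => //.
  by apply: okL_cat; exact: ok_LW.
by move=> x; rewrite Phi_cat (ent_LW hF) (ent_LWN hG); ring.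
Qed.

Lemma LN_useless (F G : bool -> 'I_3 -> R) : BISO3 F -> BISO3 G ->
  G false i2 - G false i0 = 0 -> less_noisy F G.
Proof.
move=> hF hG hm; apply: LN_gen => // x hx.
rewrite d2Phi_cat !d2_LW // hm expr0n /= !mul0r addr0 mulr0 addr0 mul1r.
exact: d2W_ge0.
Qed.

Lemma LN_main (F G : bool -> 'I_3 -> R) : BISO3 F -> BISO3 G ->
  F false i2 - F false i0 != 0 -> G false i2 - G false i0 != 0 ->
  (F false i2 - F false i0) ^+ 2 * (G false i2 + G false i0) =
  (G false i2 - G false i0) ^+ 2 * (F false i2 + F false i0) ->
  F false i2 + F false i0 <= G false i2 + G false i0 ->
  less_noisy F G.
Proof.
move=> hF hG mF mG hk hc; apply: LN_gen => // x hx.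
have cF := c_pos hF mF; have cG := c_pos hG mG.
rewrite d2Phi_cat !d2_LW // mul1r.
rewrite (d2W_eq hF hx) ?gt_eqF // (d2W_eq hG hx) ?gt_eqF //.
have DF := D_pos hF hx (lt0r_neq0 cF); have DG := D_pos hG hx (lt0r_neq0 cG).
set aF := F false i2 in hk hc cF DF *; set bF := F false i0 in hk hc cF DF *.
set aG := G false i2 in hk hc cG DG *; set bG := G false i0 in hk hc cG DG *.
set DFv := (bF + (aF - bF) * x) * (aF - (aF - bF) * x) in DF *.
set DGv := (bG + (aG - bG) * x) * (aG - (aG - bG) * x) in DG *.
have -> : (aF - bF) ^+ 2 * (aF + bF) / DFv + -1 * ((aG - bG) ^+ 2 * (aG + bG) / DGv) =
  ((aF - bF) ^+ 2 * (aF + bF) * DGv - (aG - bG) ^+ 2 * (aG + bG) * DFv) / (DFv * DGv).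
  by field; rewrite (gt_eqF DF) (gt_eqF DG).
apply: divr_ge0; last by rewrite ltW // mulr_gt0.
have -> : (aF - bF) ^+ 2 * (aF + bF) * DGv - (aG - bG) ^+ 2 * (aG + bG) * DFv =
  (aF + bF) * (aG + bG) / 4 * ((aF - bF) ^+ 2 * (aG + bG) - (aG - bG) ^+ 2 * (aF + bF)) +
  (aF - bF) ^+ 2 * (aG - bG) ^+ 2 * (x - 1 / 2) ^+ 2 * ((aG + bG) - (aF + bF)).
  by rewrite /DFv /DGv; field.
rewrite hk subrr mulr0 add0r.
by rewrite mulr_ge0 ?subr_ge0 // mulr_ge0 ?sqr_ge0 // mulr_ge0 ?sqr_ge0.
Qed.

Theorem main_gen (F G : bool -> 'I_3 -> R) :
  BISO3 F -> BISO3 G -> eta_KL F = eta_KL G ->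
  less_noisy F G \/ less_noisy G F.
Proof.
move=> hF hG he.
have [mG|mG] := eqVneq (G false i2 - G false i0) 0.
  by left; apply: LN_useless.
have [mF|mF] := eqVneq (F false i2 - F false i0) 0.
  by right; apply: LN_useless.
rewrite (eta_val hF) (eta_val hG) in he.
have cF := c_pos hF mF; have cG := c_pos hG mG.
have hk : (F false i2 - F false i0) ^+ 2 * (G false i2 + G false i0) =
  (G false i2 - G false i0) ^+ 2 * (F false i2 + F false i0).
  move: he; set xF := (F false i2 - F false i0) ^+ 2; set xG := (G false i2 - G false i0) ^+ 2.
  move=> he.
  have := congr1 (fun z => z * (F false i2 + F false i0) * (G false i2 + G false i0)) he.
  rewrite /=.
  have -> : xF / (F false i2 + F false i0) * (F false i2 + F false i0) * (G false i2 + G false i0) =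
    xF * (G false i2 + G false i0) by field; rewrite gt_eqF.
  have -> : xG / (G false i2 + G false i0) * (F false i2 + F false i0) * (G false i2 + G false i0) =
    xG * (F false i2 + F false i0) by field; rewrite gt_eqF.
  done.
case: (lerP (F false i2 + F false i0) (G false i2 + G false i0)) => hc.
  by left; apply: LN_main.
right; apply: LN_main => //; try exact: ltW; by rewrite hk.
Qed.
End B.

Theorem mainTheorem3 (R : realType) (F G : bool -> 'I_3 -> R) :
  BISO3 F -> BISO3 G -> eta_KL F = eta_KL G ->
  less_noisy F G \/ less_noisy G F.
Proof. exact: main_gen. Qed.
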